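(* A fuzzy Archimedean Riesz space has the fuzzy countable sup property if and only if every fuzzy $\sigma$-ideal in it is a fuzzy band.
   Context: A fuzzy order on a real vector space $E$ is a map $\mu:E\times E\to[0,1]$ with $\mu(x,x)=1$; $\mu(x,y)+\mu(y,x)>1$ implies $x=y$; and $\mu(x,z)\ge\sup_{y}\min(\mu(x,y),\mu(y,z))$. Write $x\le y$ for $\mu(x,y)>\frac12$; upper bounds, suprema and infima are taken with respect to this relation. $(E,\mu)$ is a fuzzy ordered linear space if $\mu(x_1,x_2)>\frac12$ implies $\mu(x_1,x_2)\le\mu(x_1+x,x_2+x)$ for all $x$ and $\mu(x_1,x_2)\le\mu(\alpha x_1,\alpha x_2)$ for all $\alpha>0$; it is a fuzzy Riesz space if $x\vee y=\sup\{x,y\}$, $x\wedge y=\inf\{x,y\}$ exist for all $x,y$. $|x|=x\vee(-x)$. A fuzzy Riesz space is fuzzy Archimedean if for every nonzero $x$ with $0\le x$ the set $\{\lambda x:\lambda>0\}$ is not bounded above. It has the fuzzy countable sup property if whenever $\sup A$ exists for a subset $A$, there is an at most countable $B\subseteq A$ with $\sup B=\sup A$. A fuzzy ideal is a vector subspace $A$ such that $\mu(|x|,|y|)>\frac12$ and $y\in A$ imply $x\in A$; it is a fuzzy $\sigma$-ideal if $0\le x_n\in A$, $x_n\uparrow x$ (increasing with supremum $x$) imply $x\in A$; it is a fuzzy band if it contains the supremum of each of its subsets whose supremum exists in the space. *)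

(* Defs.v *)
From HB Require Import structures.
From mathcomp Require Import all_boot all_order all_algebra.
From mathcomp Require Import boolp classical_sets cardinality reals.
Set Implicit Arguments. Unset Strict Implicit. Unset Printing Implicit Defensive.
Import Order.TTheory GRing.Theory Num.Theory.
Local Open Scope ring_scope.
Local Open Scope classical_set_scope.

Section Fuzzy.
Variables (R : realType) (E : lmodType R).
Implicit Types (mu : E -> E -> R) (A B : set E) (x y z s u : E).

(* fuzzy order: values in [0,1]; reflexivity; antisymmetry; transitivity
   mu(x,z) >= sup_y min(mu(x,y),mu(y,z)), written pointwise in y. *)
Definition fuzzy_order mu : Prop :=
  [/\ (forall x y, 0 <= mu x y <= 1),
      (forall x, mu x x = 1),
      (forall x y, 1 < mu x y + mu y x -> x = y) &
      (forall x y z, Num.min (mu x y) (mu y z) <= mu x z)].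

Definition fle mu x y : Prop := 2^-1 < mu x y.

Definition fupper mu A u : Prop := forall a, A a -> fle mu a u.
Definition flower mu A u : Prop := forall a, A a -> fle mu u a.

Definition fis_sup mu A s : Prop :=
  fupper mu A s /\ forall u, fupper mu A u -> fle mu s u.
Definition fis_inf mu A s : Prop :=
  flower mu A s /\ forall u, flower mu A u -> fle mu u s.

Definition fuzzy_ordered_linear mu : Prop :=
  [/\ fuzzy_order mu,
      (forall x1 x2 x, 2^-1 < mu x1 x2 -> mu x1 x2 <= mu (x1 + x) (x2 + x)) &
      (forall x1 x2 (a : R), 2^-1 < mu x1 x2 -> 0 < a ->
          mu x1 x2 <= mu (a *: x1) (a *: x2))].

Definition fuzzy_riesz mu : Prop :=
  [/\ fuzzy_ordered_linear mu,
      (forall x y, exists s, fis_sup mu [set x; y] s) &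
      (forall x y, exists s, fis_inf mu [set x; y] s)].

Definition fis_abs mu x a : Prop := fis_sup mu [set x; - x] a.

Definition fuzzy_archimedean mu : Prop :=
  forall x, fle mu 0 x -> x <> 0 ->
    ~ (exists u, fupper mu [set l *: x | l in [set l : R | 0 < l]] u).

Definition fuzzy_countable_sup mu : Prop :=
  forall A s, fis_sup mu A s ->
    exists B, [/\ B `<=` A, countable B & fis_sup mu B s].

Definition subspace A : Prop :=
  [/\ A 0, (forall x y, A x -> A y -> A (x + y)) &
      (forall (a : R) x, A x -> A (a *: x))].

Definition fuzzy_ideal mu A : Prop :=
  subspace A /\
  forall x y ax ay, fis_abs mu x ax -> fis_abs mu y ay ->
    fle mu ax ay -> A y -> A x.

Definition fuzzy_sigma_ideal mu A : Prop :=
  fuzzy_ideal mu A /\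
  forall (xn : nat -> E) x,
    (forall n, fle mu 0 (xn n) /\ A (xn n)) ->
    (forall n, fle mu (xn n) (xn n.+1)) ->
    fis_sup mu (range xn) x -> A x.

Definition fuzzy_band mu A : Prop :=
  fuzzy_ideal mu A /\
  forall B s, B `<=` A -> fis_sup mu B s -> A s.

End Fuzzy.

(* Main.v *)
Require Import Defs.
From mathcomp Require Import all_boot all_order all_algebra.
From mathcomp Require Import boolp classical_sets cardinality reals.
From mathcomp Require Import lra.
Set Implicit Arguments. Unset Strict Implicit. Unset Printing Implicit Defensive.
Import Order.TTheory GRing.Theory Num.Theory.
Local Open Scope ring_scope.
Local Open Scope classical_set_scope.

Section Theory.
Variables (R : realType) (E : lmodType R) (mu : E -> E -> R).
Hypothesis HR : fuzzy_riesz mu.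

Local Notation "x <=m y" := (fle mu x y) (at level 70).

Lemma fo : fuzzy_order mu.
Proof. by case: HR => -[]. Qed.

Lemma fle_refl x : x <=m x.
Proof. case: fo => _ h _ _; rewrite /fle h; lra. Qed.

Lemma fle_trans y x z : x <=m y -> y <=m z -> x <=m z.
Proof.
case: fo => _ _ _ h; rewrite /fle => a b.
apply: (lt_le_trans _ (h x y z)); rewrite lt_min a b //.
Qed.

Lemma fle_anti x y : x <=m y -> y <=m x -> x = y.
Proof. case: fo => _ _ h _; rewrite /fle => a b; apply: h; lra. Qed.

Lemma leD x y z : x <=m y -> x + z <=m y + z.
Proof. case: HR => -[_ h _] _ _; rewrite /fle => a; exact: lt_le_trans (h _ _ z a). Qed.

Lemma leZ (a : R) x y : 0 < a -> x <=m y -> a *: x <=m a *: y.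
Proof. case: HR => -[_ _ h] _ _; rewrite /fle => a0 b; exact: lt_le_trans (h _ _ _ b a0). Qed.

Lemma leDr x y z : (x + z <=m y + z) <-> (x <=m y).
Proof.
split; last exact: leD.
by move=> /(leD (- z)); rewrite -!addrA subrr !addr0.
Qed.

Lemma leDl x y z : (z + x <=m z + y) <-> (x <=m y).
Proof. by rewrite ![z + _]addrC leDr. Qed.

Lemma subge0 x y : (0 <=m y - x) <-> (x <=m y).
Proof. by rewrite -(leDr 0 (y - x) x) add0r subrK. Qed.

Lemma leN x y : x <=m y -> - y <=m - x.
Proof. by move=> h; rewrite -(leDr _ _ (x + y)) addKr addrCA addNr addr0. Qed.

Lemma leDD x y x' y' : x <=m y -> x' <=m y' -> x + x' <=m y + y'.
Proof.
move=> h1 h2; apply: (fle_trans (y := y + x')); first exact: leD.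
by rewrite leDl.
Qed.

Lemma leZr (a : R) x y : 0 < a -> (a *: x <=m a *: y) <-> (x <=m y).
Proof.
move=> a0; split; last exact: leZ.
move=> /(leZ (a := a^-1)); rewrite !scalerA mulVf ?gt_eqF // !scale1r; apply.
by rewrite invr_gt0.
Qed.

Lemma le0Z (a : R) x : 0 <= a -> 0 <=m x -> 0 <=m a *: x.
Proof.
rewrite le_eqVlt => /orP[/eqP <-|a0] h; first by rewrite scale0r; apply: fle_refl.
by rewrite -(scaler0 _ a); apply: leZ.
Qed.


Let Hsup x y : exists s, fis_sup mu [set x; y] s.
Proof. by case: HR => _ h _; apply: h. Qed.

Definition jn x y := sval (cid (Hsup x y)).

Lemma jnP x y : fis_sup mu [set x; y] (jn x y).
Proof. exact: (svalP (cid (Hsup x y))). Qed.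

Lemma jn_ubl x y : x <=m jn x y.
Proof. by case: (jnP x y) => h _; apply: h; left. Qed.

Lemma jn_ubr x y : y <=m jn x y.
Proof. by case: (jnP x y) => h _; apply: h; right. Qed.

Lemma jn_lub x y z : x <=m z -> y <=m z -> jn x y <=m z.
Proof. by case: (jnP x y) => _ h a b; apply: h => w [->|->]. Qed.

Lemma sup_uniq (X : set E) s t : fis_sup mu X s -> fis_sup mu X t -> s = t.
Proof. by move=> [a b] [c d]; apply: fle_anti; [apply: b|apply: d]. Qed.

Lemma jn_sup x y s : fis_sup mu [set x; y] s -> s = jn x y.
Proof. move=> h; exact: sup_uniq h (jnP x y). Qed.

Lemma jnE x y z : x <=m z -> y <=m z ->
  (forall u, x <=m u -> y <=m u -> z <=m u) -> jn x y = z.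
Proof.
move=> a b c; apply: fle_anti; first exact: jn_lub.
by apply: c; [apply: jn_ubl|apply: jn_ubr].
Qed.

Lemma jnC x y : jn x y = jn y x.
Proof. by apply: jnE => [||u a b]; [apply: jn_ubr|apply: jn_ubl|apply: jn_lub]. Qed.

Lemma jnD x y z : jn (x + z) (y + z) = jn x y + z.
Proof.
apply: jnE => [|| u a b]; first by rewrite leDr; apply: jn_ubl.
  by rewrite leDr; apply: jn_ubr.
have h : jn x y <=m u - z.
  by apply: jn_lub; rewrite -(leDr _ _ z) subrK; [apply: a|apply: b].
by move: h; rewrite -(leDr _ _ z) subrK.
Qed.

Lemma jnZ (a : R) x y : 0 < a -> jn (a *: x) (a *: y) = a *: jn x y.
Proof.
move=> a0; apply: jnE => [|| u h1 h2]; rewrite ?leZr //; [apply: jn_ubl|apply: jn_ubr|].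
have -> : u = a *: (a^-1 *: u) by rewrite scalerA divff ?gt_eqF // scale1r.
rewrite leZr //; apply: jn_lub; rewrite -(leZr _ _ a0) scalerA divff ?gt_eqF // scale1r //.
Qed.

Lemma jn_id x y : x <=m y -> jn x y = y.
Proof. by move=> h; apply: jnE => //; apply: fle_refl. Qed.

Lemma jn_mono x x' y y' : x <=m x' -> y <=m y' -> jn x y <=m jn x' y'.
Proof.
move=> a b; apply: jn_lub.
  by apply: fle_trans a _; apply: jn_ubl.
by apply: fle_trans b _; apply: jn_ubr.
Qed.

Definition mt x y := - jn (- x) (- y).

Lemma mt_lbl x y : mt x y <=m x.
Proof. by rewrite /mt -{2}(opprK x); apply: leN; apply: jn_ubl. Qed.

Lemma mt_lbr x y : mt x y <=m y.
Proof. by rewrite /mt -{2}(opprK y); apply: leN; apply: jn_ubr. Qed.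

Lemma mt_glb x y z : z <=m x -> z <=m y -> z <=m mt x y.
Proof.
move=> a b; rewrite /mt -(opprK z); apply: leN; apply: jn_lub; exact: leN.
Qed.

Lemma mtE x y z : z <=m x -> z <=m y ->
  (forall u, u <=m x -> u <=m y -> u <=m z) -> mt x y = z.
Proof.
move=> a b c; apply: fle_anti; last exact: mt_glb.
by apply: c; [apply: mt_lbl|apply: mt_lbr].
Qed.

Lemma mtC x y : mt x y = mt y x.
Proof. by rewrite /mt jnC. Qed.

Lemma mt_id x y : x <=m y -> mt x y = x.
Proof. by move=> h; apply: mtE => //; apply: fle_refl. Qed.

Lemma mt_mono x x' y y' : x <=m x' -> y <=m y' -> mt x y <=m mt x' y'.
Proof.
move=> a b; apply: mt_glb.
  by apply: fle_trans a; apply: mt_lbl.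
by apply: fle_trans b; apply: mt_lbr.
Qed.

Lemma mtD x y z : mt (x + z) (y + z) = mt x y + z.
Proof. by rewrite /mt !opprD jnD opprD opprK. Qed.

Lemma mt_jn x y : mt x y + jn x y = x + y.
Proof.
have -> : jn x y = jn (- y) (- x) + (x + y).
  by rewrite -jnD addKr [- y + _]addrC addrK.
by rewrite /mt jnC addrA addNr add0r.
Qed.

Definition pp x := jn x 0.
Definition ab x := jn x (- x).

Lemma pp_ge0 x : 0 <=m pp x.
Proof. exact: jn_ubr. Qed.

Lemma ab_ge0 x : 0 <=m ab x.
Proof.
have h : 0 <=m 2%:R *: ab x.
  by rewrite scaler_nat mulr2n -(subrr x); apply: leDD; [apply: jn_ubl|apply: jn_ubr].
by rewrite -(leZr _ _ (a := 2%:R)) ?scaler0 // ltr0n.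
Qed.

Lemma ab_id x : 0 <=m x -> ab x = x.
Proof.
move=> h; rewrite /ab jnC; apply: jn_id; apply: (fle_trans (y := 0)) => //.
by rewrite -oppr0; apply: leN.
Qed.

Lemma abN x : ab (- x) = ab x.
Proof. by rewrite /ab opprK jnC. Qed.

Lemma ab0 : ab 0 = 0.
Proof. apply: ab_id; exact: fle_refl. Qed.

Lemma abZ (a : R) x : ab (a *: x) = `|a| *: ab x.
Proof.
have pos b y : 0 < b -> ab (b *: y) = b *: ab y.
  by move=> b0; rewrite /ab -jnZ // scalerN.
have [a0|a0|->] := ltgtP a 0; last by rewrite normr0 !scale0r ab0.
  have -> : a *: x = (- a) *: (- x) by rewrite scalerN scaleNr opprK.
  by rewrite ltr0_norm // pos ?oppr_gt0 // abN.
by rewrite gtr0_norm // pos.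
Qed.


Lemma ab_ubl x : x <=m ab x. Proof. exact: jn_ubl. Qed.
Lemma ab_ubr x : - x <=m ab x. Proof. exact: jn_ubr. Qed.

Lemma ab_tri x y : ab (x + y) <=m ab x + ab y.
Proof.
apply: jn_lub; first by apply: leDD; apply: ab_ubl.
by rewrite opprD; apply: leDD; apply: ab_ubr.
Qed.

Lemma fis_abs_eq x a : fis_abs mu x a -> a = ab x.
Proof. exact: jn_sup. Qed.

Lemma fis_abs_ab x : fis_abs mu x (ab x).
Proof. exact: jnP. Qed.

Lemma le_addl p x y : 0 <=m p -> x <=m y -> x <=m p + y.
Proof. by move=> a b; rewrite -[x]add0r; apply: leDD. Qed.

Lemma mt_ge0 x y : 0 <=m x -> 0 <=m y -> 0 <=m mt x y.
Proof. exact: mt_glb. Qed.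

Lemma mt_subadd p q e : 0 <=m p -> 0 <=m q -> 0 <=m e ->
  mt (p + q) e <=m mt p e + mt q e.
Proof.
move=> p0 q0 e0.
have me : mt (p + q) e <=m e by apply: mt_lbr.
rewrite -mtD; apply: mt_glb.
  rewrite [p + mt q e]addrC -mtD; apply: mt_glb; first by rewrite [q + p]addrC; apply: mt_lbl.
  by rewrite [e + p]addrC; apply: le_addl.
rewrite [e + mt q e]addrC -mtD; apply: mt_glb; by apply: le_addl.
Qed.

Lemma mtZ (a : R) x y : 0 < a -> mt (a *: x) (a *: y) = a *: mt x y.
Proof. by move=> a0; rewrite /mt -!scalerN jnZ // scalerN. Qed.

Lemma mt0 e : 0 <=m e -> mt 0 e = 0.
Proof. exact: mt_id. Qed.

Lemma mt_scale (c : R) p e : 0 <= c -> 0 <=m p -> 0 <=m e -> mt p e = 0 ->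
  mt (c *: p) e = 0.
Proof.
move=> c0 p0 e0 h.
have k0 : 0 < c + 1 by rewrite ltr_wpDl.
apply: fle_anti; last by apply: mt_ge0 => //; apply: le0Z.
rewrite -(scaler0 _ (c + 1)) -h -mtZ //; apply: mt_mono.
  by rewrite -subge0 scalerDl scale1r addrAC subrr add0r.
by rewrite -subge0 scalerDl scale1r addrK; apply: le0Z.
Qed.

Lemma jn_pp x : jn (pp x) (pp (- x)) = ab x.
Proof.
apply: jnE.
- by apply: jn_lub; [apply: ab_ubl|apply: ab_ge0].
- by apply: jn_lub; [apply: ab_ubr|apply: ab_ge0].
- move=> u a b; apply: jn_lub.
    by apply: fle_trans a; apply: jn_ubl.
  by apply: fle_trans b; apply: jn_ubl.
Qed.

Lemma ppN x : pp (- x) = pp x - x.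
Proof. by rewrite /pp -jnD add0r subrr jnC. Qed.

Lemma ab_pp x : ab x = 2%:R *: pp x - x.
Proof.
rewrite /ab /pp -jnZ ?ltr0n // scaler0 -jnD add0r; congr jn.
by rewrite scaler_nat mulr2n addrK.
Qed.

Lemma pp_disj x : mt (pp x) (pp (- x)) = 0.
Proof.
have h := mt_jn (pp x) (pp (- x)).
rewrite jn_pp ppN ab_pp in h.
rewrite ppN; apply: (addIr (2%:R *: pp x - x)); rewrite h add0r scaler_nat mulr2n.
by rewrite addrA.
Qed.

Lemma sup_shift (X : set E) s c :
  fis_sup mu X s -> fis_sup mu [set y + c | y in X] (s + c).
Proof.
move=> [ub lub]; split; first by move=> _ [y Xy <-]; rewrite leDr; apply: ub.
move=> u hu; rewrite -(leDr _ _ (- c)) addrK; apply: lub => y Xy.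
by rewrite -(leDr _ _ c) subrK; apply: hu; exists y.
Qed.

Lemma sup_pp (X : set E) s : X !=set0 ->
  fis_sup mu X s -> fis_sup mu [set pp y | y in X] (pp s).
Proof.
move=> [y0 Xy0] [ub lub]; split.
  by move=> _ [y Xy <-]; apply: jn_mono; [apply: ub|apply: fle_refl].
move=> u hu; apply: jn_lub.
  apply: lub => y Xy; apply: fle_trans (hu _ (ex_intro2 _ _ y Xy erefl)).
  exact: jn_ubl.
apply: fle_trans (hu _ (ex_intro2 _ _ y0 Xy0 erefl)); exact: jn_ubr.
Qed.

Lemma sup_mt (X : set E) s e :
  fis_sup mu X s -> fis_sup mu [set mt y e | y in X] (mt s e).
Proof.
move=> [ub lub]; split.
  by move=> _ [y Xy <-]; apply: mt_mono; [apply: ub|apply: fle_refl].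
move=> w hw.
have : s <=m w + jn s e - e.
  apply: lub => y Xy.
  have -> : y = mt y e + jn y e - e by rewrite mt_jn addrK.
  rewrite -!addrA; apply: leDD; first by apply: hw; exists y.
  by rewrite leDr; apply: jn_mono; [apply: ub|apply: fle_refl].
move=> h; have -> : mt s e = s + (e - jn s e) by rewrite addrA -(mt_jn s e) addrK.
have -> : w = (w + jn s e - e) + (e - jn s e) by rewrite addrA subrK addrK.
by rewrite leDr.
Qed.


Lemma ideal_jn (A : set E) x y : fuzzy_ideal mu A -> A x -> A y -> A (jn x y).
Proof.
move=> [hsub sol] Ax Ay; case: hsub => A0 AD AZ.
have -> : jn x y = pp (x - y) + y by rewrite /pp -jnD subrK add0r.
apply: (AD) => //.
have Axy : A (x - y) by apply: (AD) => //; rewrite -scaleN1r; apply: (AZ).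
apply: (sol _ (x - y) (ab (pp (x - y))) (ab (x - y))) => //.
- exact: fis_abs_ab.
- exact: fis_abs_ab.
- rewrite ab_id; last exact: pp_ge0.
  by apply: jn_lub; [apply: ab_ubl|apply: ab_ge0].
Qed.

Lemma sup_empty s : fis_sup mu set0 s -> s = 0.
Proof.
move=> [_ h].
have h1 : s <=m 0 by apply: h.
have h2 : s <=m s + s by apply: h.
apply: fle_anti => //.
by move: h2; rewrite -{1}(add0r s) leDr.
Qed.

Lemma forward : fuzzy_countable_sup mu ->
  forall A : set E, fuzzy_sigma_ideal mu A -> fuzzy_band mu A.
Proof.
move=> csp A [hid sig]; split => // B s BA hs.
have [A0 AD AZ] := hid.1.
have [B' [B'B cB' hB']] := csp _ _ hs.
have [ne|emp] := pselect (exists b, B' b); last first.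
  have e : B' = set0 by apply/seteqP; split => x // Bx; exfalso; apply: emp; exists x.
  by rewrite e in hB'; rewrite (sup_empty hB').
case: ne => b0 Bb0.
have [f finj] := countable_injP _ cB'.
have [g hg] : {g : nat -> E & forall n, 
   B' (g n) /\ ((exists y, B' y /\ f y = n) -> f (g n) = n)}.
  apply: (@choice _ _ (fun n x => B' x /\ ((exists y, B' y /\ f y = n) -> f x = n))) => n; have [[y [By fy]]|no] := pselect (exists y, B' y /\ f y = n).
    by exists y; split => // _.
  by exists b0; split => // h; exfalso; apply: no.
have gB n : B' (g n) by case: (hg n).
have gsurj y : B' y -> exists n, g n = y.
  move=> By; exists (f y); apply: finj; rewrite ?inE //.
  by case: (hg (f y)) => _; apply; exists y.
pose c := fix c n := if n is m.+1 then jn (c m) (g m.+1) else g 0.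
have cA n : A (c n).
  elim: n => [|n ih] /=; first exact/BA/B'B.
  by apply: ideal_jn => //; apply/BA/B'B.
have cS n : c n <=m c n.+1 by apply: jn_ubl.
have c0n n : c 0 <=m c n.
  elim: n => [|n ih]; first exact: fle_refl.
  exact: fle_trans ih (cS n).
have cs n : c n <=m s.
  case: hB' => ub _; elim: n => [|n ih] /=; first by apply: ub.
  by apply: jn_lub => //; apply: ub.
have gc n : g n <=m c n by case: n => [|n] /=; [apply: fle_refl|apply: jn_ubr].
suff : A (s - c 0) by move=> h; rewrite -(subrK (c 0) s); apply: (AD).
apply: (sig (fun n => c n - c 0)).
- by move=> n; split; [rewrite subge0|apply: (AD) => //; rewrite -scaleN1r; apply: (AZ)].
- by move=> n; rewrite leDr.
- split; first by move=> _ [n _ <-]; rewrite leDr.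
  move=> u hu; rewrite -(leDr _ _ (c 0)) subrK.
  case: hB' => _; apply => b /gsurj [n <-].
  apply: fle_trans (gc n) _; rewrite -(subrK (c 0) (c n)) leDr.
  by apply: hu; exists n.
Qed.


Lemma arch0 (Harch : fuzzy_archimedean mu) v t : 0 <=m v ->
  (forall n : nat, n.+1%:R *: v <=m t) -> v = 0.
Proof.
move=> v0 h; have [//|vn0] := pselect (v = 0); exfalso.
apply: (Harch v v0 vn0); exists t => _ [l l0 <-].
have lb := archi_boundP (ltW l0).
apply: fle_trans (h (Num.bound l)).
rewrite -subge0.
have -> : (Num.bound l).+1%:R *: v - l *: v = ((Num.bound l).+1%:R - l) *: v.
  by rewrite scalerBl.
apply: le0Z => //; rewrite subr_ge0 ltW //; apply: lt_le_trans lb _.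
by rewrite ler_nat.
Qed.

Lemma countableU2 (A B : set E) : countable A -> countable B -> countable (A `|` B).
Proof.
move=> cA cB.
have sub : A `|` B `<=` \bigcup_(i in [set: bool]) (if i then A else B).
  by move=> x [Ax|Bx]; [exists true|exists false].
apply: sub_countable (subset_card_le sub) _.
by apply: bigcup_countable => // -[].
Qed.


Lemma pp_id x : 0 <=m x -> pp x = x.
Proof. by move=> h; rewrite /pp jnC jn_id. Qed.

Lemma mt_eq0 x y : 0 <=m x -> 0 <=m y -> x <=m 0 -> mt x y = 0.
Proof.
move=> x0 y0 h; have -> : x = 0 by apply: fle_anti.
exact: mt0.
Qed.

Lemma le0_eq0 z x : 0 <=m z -> z <=m x -> x = 0 -> z = 0.
Proof. by move=> a b e; rewrite e in b; apply: fle_anti. Qed.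

Lemma cd (Harch : fuzzy_archimedean mu)
  (H : forall A : set E, fuzzy_sigma_ideal mu A -> fuzzy_band mu A)
  (x0 : E) (D : set E) : 0 <=m x0 ->
  (forall e, D e -> [/\ 0 <=m e, e <> 0 & e <=m x0]) ->
  (forall e e', D e -> D e' -> e <> e' -> mt e e' = 0) ->
  (forall y, 0 <=m y -> (forall e, D e -> mt y e = 0) -> mt y x0 = 0) ->
  countable D.
Proof.
move=> x00 Dpos Ddisj Dmax.
pose I := fun x => exists C : set E, countable C /\
   forall e, D e -> ~ C e -> mt (ab x) e = 0.
have e0 e : D e -> 0 <=m e by case/Dpos.
have Iid : fuzzy_ideal mu I.
  split; first split.
  - exists set0; split => // e De _; rewrite ab0; apply: mt0; exact: e0.
  - move=> x y [C1 [c1 h1]] [C2 [c2 h2]]; exists (C1 `|` C2); split.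
      exact: countableU2.
    move=> e De nC; apply: le0_eq0 (mt_ge0 (ab_ge0 _) (e0 _ De)) _ _.
      apply: fle_trans (mt_subadd (ab_ge0 x) (ab_ge0 y) (e0 _ De)).
      by apply: mt_mono; [apply: ab_tri|apply: fle_refl].
    by rewrite h1 ?h2 ?addr0 // => ?; apply: nC; [right|left].
  - move=> a x [C [c h]]; exists C; split => // e De nC.
    rewrite abZ; apply: mt_scale => //; [exact: ab_ge0|exact: e0|exact: h].
  move=> x y ax ay /fis_abs_eq -> /fis_abs_eq -> le [C [c h]].
  exists C; split => // e De nC.
  apply: le0_eq0 (mt_ge0 (ab_ge0 _) (e0 _ De)) _ (h _ De nC).
  by apply: mt_mono => //; apply: fle_refl.
have Isig : fuzzy_sigma_ideal mu I.
  split => // xn x hxn inc hsup.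
  have [Cn hCn] : {Cn : nat -> set E & forall n, countable (Cn n) /\
     forall e, D e -> ~ Cn n e -> mt (ab (xn n)) e = 0}.
    apply: (@choice _ _ (fun n C => countable C /\
     forall e, D e -> ~ C e -> mt (ab (xn n)) e = 0)) => n.
    by case: (hxn n) => _ [C hC]; exists C.
  exists (\bigcup_(n in [set: nat]) Cn n); split.
    by apply: bigcup_countable => // n _; case: (hCn n).
  move=> e De nC.
  have x0le : 0 <=m x.
    apply: fle_trans (hxn 0%N).1 _; case: hsup => ub _; apply: ub; exists 0%N => //.
  rewrite ab_id //.
  have := sup_mt e hsup; case => _ lub.
  apply: fle_anti; last exact: mt_ge0 x0le (e0 _ De).
  apply: lub => _ [_ [n _ <-] <-].
  case: (hCn n) => _ h; rewrite -(ab_id (hxn n).1) h //; first exact: fle_refl.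
  by move=> Cne; apply: nC; exists n.
have [_ band] := H _ Isig.
have T0 : I 0 by case: Iid => -[].
have Ix0 : I x0.
  apply: (band [set y | I y /\ 0 <=m y /\ y <=m x0]); first by move=> y [].
  split; first by move=> y [_ []].
  move=> w hw; pose u := x0 - mt w x0.
  have u0 : 0 <=m u by rewrite subge0; apply: mt_lbr.
  have w0 : 0 <=m mt w x0.
    by apply: mt_glb => //; apply: (hw 0); split => //; split => //; apply: fle_refl.
  have ux : u <=m x0.
    by rewrite -(leDr _ _ (mt w x0)) subrK addrC; apply: le_addl => //; apply: fle_refl.
  suff : u = 0.
    move=> /eqP; rewrite subr_eq0 => /eqP ->; exact: mt_lbl.
  have : mt u x0 = 0.
    apply: Dmax => // e De.
    pose c := mt u e.
    have c0 : 0 <=m c by apply: mt_ge0 => //; apply: e0.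
    have Ic : I c.
      exists [set e]; split; first exact: countable1.
      move=> e' De' ne; rewrite ab_id //.
      apply: le0_eq0 (mt_ge0 c0 (e0 _ De')) _ (Ddisj e e' De De' _).
        by apply: mt_mono; [apply: mt_lbr|apply: fle_refl].
      by move=> ee; apply: ne; rewrite ee.
    have Inc (n : nat) : I (n%:R *: c).
      case: Iid => -[_ _ AZ] _; exact: AZ.
    have ind (n : nat) : n%:R *: c <=m mt w x0.
      elim: n => [|n ih]; first by rewrite scale0r.
      have h1 : n.+1%:R *: c <=m x0.
        rewrite -natr1 scalerDl scale1r -(subrK (mt w x0) x0) [_ - _ + _]addrC.
        apply: leDD => //; apply: fle_trans (mt_lbl u e) _; exact: fle_refl.
      apply: mt_glb => //; apply: (hw _); split => //; split => //.
      by apply: le0Z.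
    apply: (arch0 Harch c0 (t := mt w x0)) => n; exact: ind.
  by rewrite mt_id.
case: Ix0 => C [cC hC].
apply: sub_countable (subset_card_le (_ : D `<=` C)) cC.
move=> e De; apply: contrapT => nC.
case: (Dpos e De) => e00 en0 ex.
apply: en0; rewrite -(hC e De nC) ab_id // mtC mt_id //.
Qed.


Lemma level (Harch : fuzzy_archimedean mu)
  (H : forall A : set E, fuzzy_sigma_ideal mu A -> fuzzy_band mu A)
  (A : set E) s a0 (eps : R) : fis_sup mu A s -> A a0 -> 0 < eps -> eps <= 1 ->
  exists B : set E, [/\ B `<=` A, countable B &
    forall w, a0 <=m w -> (forall b, B b -> b <=m w) -> pp (s - w) <=m eps *: (s - a0)].
Proof.
move=> hs Aa0 eps0 eps1.
have t0 : 0 <=m s - a0 by rewrite subge0; case: hs => ub _; apply: ub.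
set t := s - a0 in t0 *.
have x00 : 0 <=m eps *: t by apply: le0Z => //; apply: ltW.
set x0 := eps *: t in x00 *.
pose d a := pp (a - s + x0).
have dle a : A a -> d a <=m x0.
  move=> Aa; apply: jn_lub => //.
  rewrite -{2}(add0r x0) leDr -(leDr _ _ s) subrK add0r.
  by case: hs => ub _; apply: ub.
pose Pos e := [/\ 0 <=m e, e <> 0 & exists a, A a /\ e <=m d a].
pose P (D : set E) := D `<=` Pos /\
   (forall e e', D e -> D e' -> e <> e' -> mt e e' = 0).
have [D [[DP Ddisj] Dmaxl]] : exists D, P D /\ forall B, D `<` B -> ~ P B.
  apply: Zorn_bigcup => F FP tot; split.
    by move=> e [X FX Xe]; exact: (FP X FX).1 e Xe.
  move=> e e' [X FX Xe] [Y FY Ye] ne; case: (tot X Y FX FY) => [XY|YX].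
    by apply: (FP Y FY).2 => //; apply: XY.
  by apply: (FP X FX).2 => //; apply: YX.
have Dmax y : 0 <=m y -> (forall e, D e -> mt y e = 0) -> mt y x0 = 0.
  move=> y0 hy.
  have hd a : A a -> mt y (d a) = 0.
    move=> Aa; have [//|zn0] := pselect (mt y (d a) = 0); exfalso.
    set z := mt y (d a) in zn0.
    have zy : z <=m y by apply: mt_lbl.
    have z0 : 0 <=m z by apply: mt_ge0 => //; apply: pp_ge0.
    have zD e : D e -> mt e z = 0.
      move=> De; apply: le0_eq0 (mt_ge0 _ z0) _ (_ : mt e y = 0).
      - by case: (DP e De).
      - by apply: mt_mono => //; apply: fle_refl.
      - by rewrite mtC; apply: hy.
    apply: (Dmaxl (D `|` [set z])).
      split; first by move=> e De; left.
      move=> h; have := h z (or_intror erefl) => Dz; apply: zn0.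
      by rewrite -(zD z Dz) mt_id //; apply: fle_refl.
    split.
      move=> e [De|->]; first exact: DP.
      by split => //; exists a; split => //; apply: mt_lbr.
    move=> e e' [De|->] [De'|->] ne.
    - exact: Ddisj.
    - exact: zD.
    - by rewrite mtC; apply: zD.
    - by exfalso; apply: ne.
  have hs1 := sup_shift (- s + x0) hs.
  have hs2 := sup_pp (ex_intro _ (a0 + (- s + x0)) (ex_intro2 _ _ a0 Aa0 erefl)) hs1.
  have hs3 := sup_mt y hs2.
  have e1 : s + (- s + x0) = x0 by rewrite addrA subrr add0r.
  rewrite e1 (pp_id x00) in hs3.
  rewrite mtC; apply: fle_anti; last by apply: mt_ge0.
  case: hs3 => _; apply => _ [_ [_ [a Aa <-] <-] <-].
  by rewrite mtC addrA hd //; apply: fle_refl.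
have cD : countable D.
  apply: (cd Harch H x00) => // e De.
  case: (DP e De) => e0 en0 [a [Aa ea]]; split => //.
  exact: fle_trans ea (dle _ Aa).
have [ae hae] : {ae : E -> E & forall e, D e -> A (ae e) /\ e <=m d (ae e)}.
  apply: (@choice _ _ (fun e a => D e -> A a /\ e <=m d a)) => e.
  have [De|nDe] := pselect (D e); last by exists a0.
  by case: (DP e De) => _ _ [a ha]; exists a.
exists (ae @` D); split.
- by move=> _ [e De <-]; case: (hae e De).
- exact: sub_countable (card_image_le ae D) cD.
move=> w a0w hb.
pose v := pp (s - w); pose z := pp (v - x0).
have v0 : 0 <=m v by apply: pp_ge0.
have hz e : D e -> mt z e = 0.
  move=> De; case: (hae e De) => Ab eb.
  have Bb : (ae @` D) (ae e) by exists e.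
  set b := ae e in Ab eb Bb.
  have zle : z <=m pp (- (b - s + x0)).
    apply: jn_lub; last by apply: pp_ge0.
    rewrite /v /pp -jnD add0r; apply: jn_mono; last by rewrite -oppr0; apply: leN.
    have -> : - (b - s + x0) = s - b - x0 by rewrite opprD opprB.
    by rewrite leDr leDl; apply: leN; apply: hb.
  apply: le0_eq0 (mt_ge0 (pp_ge0 _) (_ : 0 <=m e)) _ (pp_disj (b - s + x0)).
    by case: (DP e De).
  by rewrite mtC; apply: mt_mono.
have hm := Dmax z (pp_ge0 _) hz.
have z0 : 0 <=m z by apply: pp_ge0.
have zt : z <=m t.
  apply: (fle_trans (y := v)).
    apply: jn_lub => //; rewrite -{2}(addr0 v) leDl -oppr0; exact: leN.
  apply: jn_lub => //; rewrite leDl; exact: leN.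
have ez : eps *: z = 0.
  apply: fle_anti; last by apply: le0Z => //; apply: ltW.
  rewrite -hm; apply: mt_glb; last by apply: leZ.
  rewrite -subge0 -{1}(scale1r z).
  have -> : 1 *: z - eps *: z = (1 - eps) *: z by rewrite scalerBl.
  by apply: le0Z => //; rewrite subr_ge0.
have z00 : z = 0.
  by move/eqP: ez; rewrite scaler_eq0 (gt_eqF eps0) /= => /eqP.
have : v - x0 <=m 0 by rewrite -z00; apply: jn_ubl.
by rewrite -(leDr _ _ x0) subrK add0r.
Qed.


Lemma backward (Harch : fuzzy_archimedean mu)
  (H : forall A : set E, fuzzy_sigma_ideal mu A -> fuzzy_band mu A) :
  fuzzy_countable_sup mu.
Proof.
move=> A s hs.
have [[a0 Aa0]|emp] := pselect (exists a, A a); last first.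
  exists A; split => //.
  have -> : A = set0 by apply/seteqP; split => x // Ax; exfalso; apply: emp; exists x.
  exact: countable0.
have [Bn hBn] : {Bn : nat -> set E & forall n, [/\ Bn n `<=` A, countable (Bn n) &
    forall w, a0 <=m w -> (forall b, Bn n b -> b <=m w) ->
      pp (s - w) <=m (n.+1%:R)^-1 *: (s - a0)]}.
  apply: (@choice _ _ (fun n B => [/\ B `<=` A, countable B &
    forall w, a0 <=m w -> (forall b, B b -> b <=m w) ->
      pp (s - w) <=m (n.+1%:R)^-1 *: (s - a0)])) => n.
  apply: (level Harch H hs Aa0).
    by rewrite invr_gt0 ltr0n.
  by rewrite invf_le1 ?ltr0n // ler1n.
exists ([set a0] `|` \bigcup_(n in [set: nat]) Bn n); split.
- move=> x [->|[n _ Bx]] //; case: (hBn n) => sub _ _; exact: sub.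
- apply: countableU2; first exact: countable1.
  by apply: bigcup_countable => // n _; case: (hBn n).
split.
  move=> x Bx; case: hs => ub _; apply: ub.
  case: Bx => [->|[n _ Bx]] //; case: (hBn n) => sub _ _; exact: sub.
move=> w hw.
have a0w : a0 <=m w by apply: hw; left.
have v0 : pp (s - w) = 0.
  apply: (arch0 Harch (pp_ge0 _) (t := s - a0)) => n.
  case: (hBn n) => _ _ /(_ w a0w) h.
  have : pp (s - w) <=m n.+1%:R^-1 *: (s - a0).
    by apply: h => b Bb; apply: hw; right; exists n.
  rewrite -(leZr _ _ (a := n.+1%:R)) ?ltr0n // scalerA mulfV ?pnatr_eq0 // scale1r.
  done.
have : s - w <=m 0 by rewrite -v0; apply: jn_ubl.
by rewrite -(leDr _ _ w) subrK add0r.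
Qed.

End Theory.

Theorem theorem4p10 (R : realType) (E : lmodType R) (mu : E -> E -> R) :
  fuzzy_riesz mu -> fuzzy_archimedean mu ->
  (fuzzy_countable_sup mu <->
   (forall A : set E, fuzzy_sigma_ideal mu A -> fuzzy_band mu A)).
Proof.
move=> HR Harch; split; first exact: forward.
exact: backward.
Qed.
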